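(* Let $P:\mathcal C^{op}\to\mathbf{Heyt}$ be a weak hyperdoctrine with full weak comprehensions and comprehensive diagonals, such that $\Psi_{\mathcal C}$ is a weak hyperdoctrine. Suppose that for every arrow $f$ of $\mathcal C$ the left adjoint $\exists_f$ is stable under double negation, i.e. $\exists_f=\neg\neg\exists_f$, and that $[\{\bot_A\}]$ is the bottom element of $\Psi_{\mathcal C}(A)$ for every $A$. Then the composite $[\{-\}]\circ L:\Psi_{\mathcal C}\to\Psi_{\mathcal C}$ is double negation: for every $f:X\to A$ it maps $[f]$ to $\neg\neg[f]$.
   Context: A weak hyperdoctrine is an elementary doctrine (equality predicates $\delta_A$, written $=_A$) over a weakly cartesian closed base with Heyting fibres and reindexing, and left and right adjoints $\exists,\forall$ to reindexing along product projections satisfying Beck–Chevalley. For any $f:A\to B$, $\exists_f:P(A)\to P(B)$ is the left adjoint of $P_f$, given by $\exists_f(\alpha)(b)=\exists a:A.[f(a)=_Bb\wedge\alpha(a)]$. A weak comprehension of $\alpha\in P(A)$ is an arrow $\{\alpha\}:X\to A$ with $\top\le P_{\{\alpha\}}(\alpha)$ through which every $f$ with $\top\le P_f(\alpha)$ factors; full weak comprehensions: all exist and $\alpha\le\beta$ whenever $\{\alpha\}$ factors through $\{\beta\}$. Comprehensive diagonals: $f=g$ whenever $\top\vdash f(x)=_Yg(x)$. $\Psi_{\mathcal C}$ sends $A$ to the poset reflection of $\mathcal C/A$ (elements $[f]$), with reindexing by weak pullback. The natural transformations $L:\Psi_{\mathcal C}\to P$ and $[\{-\}]:P\to\Psi_{\mathcal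 C}$ are $L_A([f:X\to A])=\exists_f(\top_X)$ and $[\{-\}]_A(\alpha)=[\{\alpha\}]$; $\neg\neg$ is computed in the Heyting algebra $\Psi_{\mathcal C}(A)$. *)

(* Defs.v *)
Set Implicit Arguments.
Unset Strict Implicit.

Record category := Category {
  ob : Type;
  hom : ob -> ob -> Type;
  idm : forall A, hom A A;
  comp : forall A B D, hom B D -> hom A B -> hom A D;
  comp_id_l : forall A B (f : hom A B), comp (idm B) f = f;
  comp_id_r : forall A B (f : hom A B), comp f (idm A) = f;
  comp_assoc : forall A B D E (h : hom D E) (g : hom B D) (f : hom A B),
      comp h (comp g f) = comp (comp h g) f }.
Arguments idm {c} A : rename.
Arguments comp {c A B D} _ _ : rename.

Record wcc_data (C : category) := {
  term : ob C;
  bang : forall X, hom X term;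
  prod : ob C -> ob C -> ob C;
  p1 : forall A B, hom (prod A B) A;
  p2 : forall A B, hom (prod A B) B;
  pair : forall X A B, hom X A -> hom X B -> hom X (prod A B);
  wexp : ob C -> ob C -> ob C;            (* wexp A B = weak exponential B^A *)
  wev : forall A B, hom (prod (wexp A B) A) B;
  wlam : forall X A B, hom (prod X A) B -> hom X (wexp A B) }.
Arguments term {C} W : rename.
Arguments bang {C} W X : rename.
Arguments prod {C} W _ _ : rename.
Arguments p1 {C} W A B : rename.
Arguments p2 {C} W A B : rename.
Arguments pair {C} W {X A B} _ _ : rename.
Arguments wexp {C} W _ _ : rename.
Arguments wev {C} W A B : rename.
Arguments wlam {C} W {X A B} _ : rename.

Record is_wcc (C : category) (W : wcc_data C) : Prop := {
  term_unique : forall X (f : hom X (term W)), f = bang W X;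
  pair_p1 : forall X A B (f : hom X A) (g : hom X B), comp (p1 W A B) (pair W f g) = f;
  pair_p2 : forall X A B (f : hom X A) (g : hom X B), comp (p2 W A B) (pair W f g) = g;
  pair_unique : forall X A B (h : hom X (prod W A B)),
      pair W (comp (p1 W A B) h) (comp (p2 W A B) h) = h;
  (* weak exponentials: existence (not uniqueness) of the transpose *)
  wexp_beta : forall X A B (f : hom (prod W X A) B),
      comp (wev W A B) (pair W (comp (wlam W f) (p1 W X A)) (p2 W X A)) = f }.

Record doctrine_data (C : category) (W : wcc_data C) := {
  fib : ob C -> Type;
  le : forall A, fib A -> fib A -> Prop;
  top : forall A, fib A;
  bot : forall A, fib A;
  meet : forall A, fib A -> fib A -> fib A;
  join : forall A, fib A -> fib A -> fib A;
  impl : forall A, fib A -> fib A -> fib A;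
  rdx : forall A B, hom A B -> fib B -> fib A;
  exq : forall X A, fib (prod W X A) -> fib X;
  allq : forall X A, fib (prod W X A) -> fib X;
  eqp : forall A, fib (prod W A A) }.
Arguments fib {C W} D _ : rename.
Arguments le {C W} D {A} _ _ : rename.
Arguments top {C W} D A : rename.
Arguments bot {C W} D A : rename.
Arguments meet {C W} D {A} _ _ : rename.
Arguments join {C W} D {A} _ _ : rename.
Arguments impl {C W} D {A} _ _ : rename.
Arguments rdx {C W} D {A B} _ _ : rename.
Arguments exq {C W} D {X A} _ : rename.
Arguments allq {C W} D {X A} _ : rename.
Arguments eqp {C W} D A : rename.

Section Doctrines.
Context (C : category) (W : wcc_data C) (D : doctrine_data W).

Definition deq A (x y : fib D A) : Prop := le D x y /\ le D y x.

Definition neg A (x : fib D A) : fib D A := impl D x (bot D A).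

Definition prodmap Y X A (f : hom Y X) : hom (prod W Y A) (prod W X A) :=
  pair W (comp f (p1 W Y A)) (p2 W Y A).

Record is_weak_hyperdoctrine : Prop := {
  le_refl : forall A (x : fib D A), le D x x;
  le_trans : forall A (x y z : fib D A), le D x y -> le D y z -> le D x z;
  top_max : forall A (x : fib D A), le D x (top D A);
  bot_min : forall A (x : fib D A), le D (bot D A) x;
  meet_glb : forall A (x y z : fib D A), le D z (meet D x y) <-> (le D z x /\ le D z y);
  join_lub : forall A (x y z : fib D A), le D (join D x y) z <-> (le D x z /\ le D y z);
  impl_adj : forall A (x y z : fib D A), le D z (impl D x y) <-> le D (meet D z x) y;
  rdx_mono : forall A B (f : hom A B) x y, le D x y -> le D (rdx D f x) (rdx D f y);
  rdx_id : forall A (x : fib D A), deq (rdx D (idm A) x) x;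
  rdx_comp : forall A B E (f : hom A B) (g : hom B E) x,
      deq (rdx D (comp g f) x) (rdx D f (rdx D g x));
  rdx_top : forall A B (f : hom A B), deq (rdx D f (top D B)) (top D A);
  rdx_bot : forall A B (f : hom A B), deq (rdx D f (bot D B)) (bot D A);
  rdx_meet : forall A B (f : hom A B) x y,
      deq (rdx D f (meet D x y)) (meet D (rdx D f x) (rdx D f y));
  rdx_join : forall A B (f : hom A B) x y,
      deq (rdx D f (join D x y)) (join D (rdx D f x) (rdx D f y));
  rdx_impl : forall A B (f : hom A B) x y,
      deq (rdx D f (impl D x y)) (impl D (rdx D f x) (rdx D f y));
  exq_adj : forall X A (a : fib D (prod W X A)) (b : fib D X),
      le D (exq D a) b <-> le D a (rdx D (p1 W X A) b);
  allq_adj : forall X A (a : fib D (prod W X A)) (b : fib D X),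
      le D b (allq D a) <-> le D (rdx D (p1 W X A) b) a;
  exq_BC : forall Y X A (f : hom Y X) (a : fib D (prod W X A)),
      deq (rdx D f (exq D a)) (exq D (rdx D (prodmap A f) a));
  allq_BC : forall Y X A (f : hom Y X) (a : fib D (prod W X A)),
      deq (rdx D f (allq D a)) (allq D (rdx D (prodmap A f) a));
  (* elementary structure (Maietti-Rosolini) *)
  eq_refl : forall A, le D (top D A) (rdx D (pair W (idm A) (idm A)) (eqp D A));
  eq_adj : forall X A (a : fib D (prod W X A)) (b : fib D (prod W (prod W X A) A)),
      le D (meet D (rdx D (p1 W (prod W X A) A) a)
                   (rdx D (pair W (comp (p2 W X A) (p1 W (prod W X A) A))
                                  (p2 W (prod W X A) A)) (eqp D A))) b
      <-> le D a (rdx D (pair W (idm (prod W X A)) (p2 W X A)) b) }.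

(** P(A) are posets (P lands in Heyt) *)
Definition fibres_antisymmetric : Prop :=
  forall A (x y : fib D A), le D x y -> le D y x -> x = y.

(** exists_f (alpha)(b) = exists a:A. [ f(a) =_B b /\ alpha(a) ] *)
Definition exist_along A B (f : hom A B) (a : fib D A) : fib D B :=
  exq D (meet D (rdx D (pair W (comp f (p2 W B A)) (p1 W B A)) (eqp D B))
                (rdx D (p2 W B A) a)).

Definition comprehensive_diagonals : Prop :=
  forall X Y (f g : hom X Y),
    le D (top D X) (rdx D (pair W f g) (eqp D Y)) -> f = g.

(** slices C/A and their preorder (poset reflection = quotient by mutual le) *)
Definition slice A := { X : ob C & hom X A }.
Definition slice_le A (s t : slice A) : Prop :=
  exists h : hom (projT1 s) (projT1 t), comp (projT2 t) h = projT2 s.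
Definition slice_eq A (s t : slice A) : Prop := slice_le s t /\ slice_le t s.

Record full_weak_comprehensions (cmp : forall A, fib D A -> slice A) : Prop := {
  cmp_sound : forall A (a : fib D A), le D (top D _) (rdx D (projT2 (cmp A a)) a);
  cmp_weak_univ : forall A (a : fib D A) Y (f : hom Y A),
      le D (top D Y) (rdx D f a) ->
      exists h : hom Y (projT1 (cmp A a)), comp (projT2 (cmp A a)) h = f;
  cmp_full : forall A (a b : fib D A), slice_le (cmp A a) (cmp A b) -> le D a b }.

Definition Lmap A (s : slice A) : fib D A := exist_along (projT2 s) (top D (projT1 s)).

End Doctrines.
Arguments slice C A : clear implicits.
Arguments full_weak_comprehensions {C W} D cmp.
Arguments exist_along {C W} D {A B} f a.
Arguments neg {C W} D {A} x.

Definition wpb_data (C : category) :=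
  forall A B X (k : hom B A) (f : hom X A), { V : ob C & (hom V B * hom V X)%type }.

Definition is_weak_pullbacks (C : category) (wpb : wpb_data C) : Prop :=
  forall A B X (k : hom B A) (f : hom X A),
    comp k (fst (projT2 (wpb A B X k f))) = comp f (snd (projT2 (wpb A B X k f))) /\
    forall Z (u : hom Z B) (v : hom Z X), comp k u = comp f v ->
      exists h : hom Z (projT1 (wpb A B X k f)),
        comp (fst (projT2 (wpb A B X k f))) h = u /\
        comp (snd (projT2 (wpb A B X k f))) h = v.

Definition slice_rdx (C : category) (wpb : wpb_data C) A B (k : hom A B)
  (s : slice C B) : slice C A :=
  existT _ (projT1 (wpb B A (projT1 s) k (projT2 s)))
           (fst (projT2 (wpb B A (projT1 s) k (projT2 s)))).

(** Psi_C with fibres the slices preordered by factorization, reindexing by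
    weak pullback, and the remaining structure supplied as data. *)
Definition Psi_doctrine (C : category) (W : wcc_data C) (wpb : wpb_data C)
  (ptop pbot : forall A, slice C A)
  (pmeet pjoin pimpl : forall A, slice C A -> slice C A -> slice C A)
  (pex pall : forall X A, slice C (prod W X A) -> slice C X)
  (peq : forall A, slice C (prod W A A)) : doctrine_data W :=
  {| fib := slice C; le := @slice_le C; top := ptop; bot := pbot;
     meet := pmeet; join := pjoin; impl := pimpl;
     rdx := @slice_rdx C wpb; exq := pex; allq := pall; eqp := peq |}.

Arguments Psi_doctrine {C} W wpb ptop pbot pmeet pjoin pimpl pex pall peq.

(* Main.v *)
Require Import Defs.

Theorem proposition4p12
  (C : category) (W : wcc_data C) (HW : is_wcc W)
  (P : doctrine_data W) (HP : is_weak_hyperdoctrine P)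
  (HPpos : fibres_antisymmetric P)
  (cmp : forall A, fib P A -> slice C A)
  (Hcmp : full_weak_comprehensions P cmp)
  (Hdiag : comprehensive_diagonals P)
  (wpb : wpb_data C) (Hwpb : is_weak_pullbacks wpb)
  (ptop pbot : forall A, slice C A)
  (pmeet pjoin pimpl : forall A, slice C A -> slice C A -> slice C A)
  (pex pall : forall X A, slice C (prod W X A) -> slice C X)
  (peq : forall A, slice C (prod W A A))
  (HPsi : is_weak_hyperdoctrine
            (Psi_doctrine W wpb ptop pbot pmeet pjoin pimpl pex pall peq))
  (Hdn : forall A B (f : hom A B) (a : fib P A),
      exist_along P f a = neg P (neg P (exist_along P f a)))
  (Hbot : forall A (s : slice C A), slice_le (cmp A (bot P A)) s) :
  forall X A (f : hom X A),
    slice_eq (cmp A (Lmap P (existT _ X f)))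
             (neg (Psi_doctrine W wpb ptop pbot pmeet pjoin pimpl pex pall peq)
                (neg (Psi_doctrine W wpb ptop pbot pmeet pjoin pimpl pex pall peq)
                   (existT _ X f))).
Proof.
  assert (SR : forall A (s : slice C A), slice_le s s) by exact (le_refl HPsi).
  assert (ST : forall A (s t u : slice C A), slice_le s t -> slice_le t u -> slice_le s u)
    by exact (le_trans HPsi).
  assert (SB : forall A (s : slice C A), slice_le (pbot A) s) by exact (bot_min HPsi).
  assert (SM : forall A (x y z : slice C A),
     slice_le z (pmeet A x y) <-> slice_le z x /\ slice_le z y) by exact (meet_glb HPsi).
  assert (SI : forall A (x y z : slice C A),
     slice_le z (pimpl A x y) <-> slice_le (pmeet A z x) y) by exact (impl_adj HPsi).
  pose proof (le_refl HP) as PR. pose proof (le_trans HP) as PT.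
  pose proof (top_max HP) as Ptop. pose proof (bot_min HP) as Pbot.
  pose proof (meet_glb HP) as PM. pose proof (impl_adj HP) as PI.
  pose proof (rdx_mono HP) as Pmono. pose proof (rdx_comp HP) as Pcomp.
  pose proof (rdx_top HP) as Prtop. pose proof (rdx_bot HP) as Prbot.
  pose proof (rdx_impl HP) as Primpl. pose proof (rdx_meet HP) as Prmeet.
  pose proof (rdx_id HP) as Prid.
  pose proof (exq_adj HP) as PE. pose proof (exq_BC HP) as PBC.
  unfold deq in *.
  assert (Cpair : forall Z Y A B (a : hom Y A) (b : hom Y B) (h : hom Z Y),
     comp (pair W a b) h = pair W (comp a h) (comp b h)).
  { intros. rewrite <- (pair_unique HW (comp (pair W a b) h)).
    rewrite !comp_assoc, (pair_p1 HW), (pair_p2 HW). reflexivity. }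
  assert (F2 : forall Y A (g : hom Y A) (a : fib P A),
     slice_le (existT _ Y g) (cmp A a) <-> le P (top P Y) (rdx P g a)).
  { intros Y A g a. split.
    - intros [h Hh]. simpl in *. subst g.
      eapply PT; [|apply (Pcomp _ _ _ h (projT2 (cmp A a)) a)].
      eapply PT; [apply (Prtop _ _ h)|]. apply Pmono. apply (cmp_sound Hcmp).
    - intros H. destruct (cmp_weak_univ Hcmp H) as [h Hh]. exists h. exact Hh. }
  assert (F3 : forall Y A (g : hom Y A) (s : slice C A),
     le P (top P Y) (bot P Y) -> slice_le (existT _ Y g) s).
  { intros Y A g s H. eapply ST; [|apply Hbot]. apply F2.
    eapply PT; [exact H|]. apply Prbot. }
  assert (F4 : forall Y A (g : hom Y A),
     slice_le (existT _ Y g) (pbot A) -> le P (top P Y) (bot P Y)).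
  { intros Y A g H. assert (H2 : slice_le (existT _ Y g) (cmp A (bot P A)))
      by (eapply ST; [exact H|apply SB]).
    apply F2 in H2. eapply PT; [exact H2|]. apply Prbot. }
  assert (F5 : forall Y A (g : hom Y A) (b : fib P A),
     le P (rdx P g b) (bot P Y) -> le P (top P Y) (rdx P g (neg P b))).
  { intros Y A g b H. unfold neg. eapply PT; [|apply Primpl]. apply PI.
    destruct (proj1 (PM _ _ _ _) (PR _ (meet P (top P Y) (rdx P g b)))) as [_ Hm].
    eapply PT; [|apply Prbot]. eapply PT; [exact Hm|exact H]. }
  assert (F6 : forall Y A (g : hom Y A) (b : fib P A),
     (forall K (k : hom K Y), le P (top P K) (rdx P (comp g k) b) -> le P (top P K) (bot P K)) ->
     le P (rdx P g b) (bot P Y)).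
  { intros Y A g b H. apply (cmp_full Hcmp). destruct (cmp Y (rdx P g b)) as [K k] eqn:E.
    apply F3. apply H with k. eapply PT; [|apply Pcomp].
    assert (H1 := cmp_sound Hcmp (rdx P g b)). rewrite E in H1. exact H1. }
  assert (N1 : forall A (a : fib P A) (s : slice C A),
     slice_le s (cmp A (neg P a)) <-> slice_le (pmeet A s (cmp A a)) (pbot A)).
  { intros A a [Y g]. split.
    - intro H.
      pose proof (proj1 (SM _ _ _ _) (SR _ (pmeet A (existT _ Y g) (cmp A a)))) as [H1 H2].
      destruct (pmeet A (existT _ Y g) (cmp A a)) as [M h].
      apply F3.
      assert (Hn : le P (top P M) (rdx P h (neg P a))) by (apply F2; eapply ST; [exact H1|exact H]).
      apply F2 in H2. unfold neg in Hn.
      assert (Hi := PT _ _ _ _ Hn (proj1 (Primpl _ _ _ _ _))).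
      apply PI in Hi. eapply PT; [|apply Prbot]. eapply PT; [|exact Hi].
      apply PM. split; [apply PR|exact H2].
    - intro H. apply F2, F5, F6. intros K k Hk. apply (F4 _ _ (comp g k)).
      eapply ST; [|exact H]. apply SM. split.
      + exists k. reflexivity.
      + apply F2. exact Hk. }
  intros X A f.
  set (phi := meet P (rdx P (pair W (comp f (p2 W A X)) (p1 W A X)) (eqp P A))
                     (rdx P (p2 W A X) (top P X))).
  assert (HL : Lmap P (existT _ X f) = exq P phi) by reflexivity.
  assert (Phi1 : forall Z (h : hom Z (prod W A X)),
     le P (rdx P h phi) (rdx P (comp (pair W (comp f (p2 W A X)) (p1 W A X)) h) (eqp P A))).
  { intros Z h. eapply PT; [|apply Pcomp]. apply Pmono.
    destruct (proj1 (PM _ _ _ _) (PR _ phi)) as [Hm _]. exact Hm. }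
  assert (N2 : forall t, slice_le (pmeet A t (existT _ X f)) (pbot A) ->
                 slice_le t (cmp A (neg P (Lmap P (existT _ X f))))).
  { intros [Y g] H. apply F2, F5, F6. intros K k Hk. rewrite HL in Hk.
    set (psi := rdx P (prodmap W X (comp g k)) phi) in *.
    assert (Hk2 := PT _ _ _ _ Hk (proj1 (PBC _ _ _ _ _))). fold psi in Hk2.
    assert (Hpsi : le P psi (bot P _)).
    { apply (cmp_full Hcmp). destruct (cmp _ psi) as [E c] eqn:Ec.
      assert (Hs := cmp_sound Hcmp psi). rewrite Ec in Hs. simpl in Hs.
      apply F3.
      assert (Hs2 := PT _ _ _ _ Hs (Pmono _ _ c _ _ (Phi1 _ _))).
      assert (Hs3 := PT _ _ _ _ Hs2 (proj2 (Pcomp _ _ _ _ _ _))).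
      assert (Eq : comp (comp (pair W (comp f (p2 W A X)) (p1 W A X)) (prodmap W X (comp g k))) c
                   = pair W (comp f (comp (p2 W K X) c)) (comp (comp g k) (comp (p1 W K X) c))).
      { unfold prodmap. rewrite !Cpair. rewrite <- !comp_assoc.
        rewrite !Cpair, (pair_p1 HW), (pair_p2 HW), <- !comp_assoc. reflexivity. }
      rewrite Eq in Hs3. apply Hdiag in Hs3.
      apply (F4 _ _ (comp f (comp (p2 W K X) c))).
      eapply ST; [|exact H]. apply SM. split.
      - exists (comp k (comp (p1 W K X) c)). simpl. rewrite comp_assoc. symmetry. exact Hs3.
      - exists (comp (p2 W K X) c). reflexivity. }
    eapply PT; [exact Hk2|]. apply PE. eapply PT; [exact Hpsi|]. apply Pbot. }
  assert (U : slice_le (existT _ X f) (cmp A (Lmap P (existT _ X f)))).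
  { apply F2. rewrite HL. eapply PT; [|apply (proj2 (PBC _ _ _ _ _))].
    set (psi := rdx P (prodmap W X f) phi).
    set (D := pair W (idm X) (idm X)).
    assert (H1 : le P psi (rdx P (p1 W X X) (exq P psi))) by (apply PE; apply PR).
    assert (H2 : le P (rdx P D psi) (exq P psi)).
    { eapply PT; [apply Pmono; exact H1|]. eapply PT; [apply (proj2 (Pcomp _ _ _ _ _ _))|].
      unfold D. rewrite (pair_p1 HW). apply Prid. }
    eapply PT; [|exact H2].
    eapply PT; [|apply (proj1 (Pcomp _ _ _ _ _ _))].
    eapply PT; [|apply (proj2 (Prmeet _ _ _ _ _))]. apply PM. split.
    - eapply PT; [|apply (proj1 (Pcomp _ _ _ _ _ _))].
      assert (Eq : comp (pair W (comp f (p2 W A X)) (p1 W A X)) (comp (prodmap W X f) D)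
                   = comp (pair W (idm A) (idm A)) f).
      { unfold prodmap, D. rewrite !Cpair, (pair_p1 HW), (pair_p2 HW), <- !comp_assoc.
        rewrite (pair_p2 HW), (pair_p1 HW), !comp_id_l, !comp_id_r. reflexivity. }
      rewrite Eq. eapply PT; [|apply (proj2 (Pcomp _ _ _ _ _ _))].
      eapply PT; [|apply Pmono; apply (eq_refl HP)]. apply Prtop.
    - eapply PT; [|apply (proj1 (Pcomp _ _ _ _ _ _))]. apply Prtop. }
  set (s := existT (fun X0 => hom X0 A) X f).
  set (L := Lmap P s).
  assert (NA : forall x y, slice_le x y -> slice_le (pimpl A y (pbot A)) (pimpl A x (pbot A))).
  { intros x y Hxy. apply SI. eapply ST; [|apply (proj1 (SI _ _ _ _) (SR _ (pimpl A y (pbot A))))].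
    apply SM. split.
    - apply (proj1 (SM _ _ _ _) (SR _ (pmeet A (pimpl A y (pbot A)) x))).
    - eapply ST; [apply (proj1 (SM _ _ _ _) (SR _ (pmeet A (pimpl A y (pbot A)) x)))|exact Hxy]. }
  assert (E1 : slice_le (pimpl A s (pbot A)) (cmp A (neg P L))).
  { apply N2. apply SI. apply SR. }
  assert (E2 : slice_le (cmp A (neg P L)) (pimpl A s (pbot A))).
  { eapply ST; [|apply NA; exact U]. apply SI. apply N1. apply SR. }
  assert (EL : cmp A L = cmp A (neg P (neg P L))) by (f_equal; apply Hdn).
  change (slice_eq (cmp A L) (pimpl A (pimpl A s (pbot A)) (pbot A))).
  split.
  - rewrite EL. eapply ST; [|apply NA; exact E1]. apply SI. apply N1. apply SR.
  - rewrite EL. apply N1. apply SI. apply NA. exact E2.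
Qed.
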